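(* Let $(\alpha_1,\alpha_2)\in\mathbb{C}^2$ and $p_1,p_2\in\mathbb{C}[u]\setminus\{0\}$ satisfy $p_1(u+\alpha_2/2)p_2(u+\alpha_1/2)=p_1(u-\alpha_2/2)p_2(u-\alpha_1/2)$. Then the noncommutative Kleinian fiber product $\mathcal{A}_{\alpha_1,\alpha_2}(p_1,p_2)$ is isomorphic to the twisted generalized Weyl algebra $\mathcal{A}(R,\boldsymbol{\sigma},\boldsymbol{t})$ with $R=\mathbb{C}[u]$, $\boldsymbol{\sigma}=(\sigma_1,\sigma_2)$ where $\sigma_i(u)=u-\alpha_i$, and $\boldsymbol{t}=(p_1,p_2)$.
   Context: Noncommutative Kleinian fiber product: $\tilde{\mathcal{A}}_{\alpha_1,\alpha_2}(p_1,p_2)$ is generated by $H,X_1^\pm,X_2^\pm$ with relations ($i=1,2$) $HX_i^\pm-X_i^\pm H=\pm\alpha_iX_i^\pm$, $X_i^+X_i^-=p_i(H-\alpha_i/2)$, $X_i^-X_i^+=p_i(H+\alpha_i/2)$, $X_1^+X_2^-=X_2^-X_1^+$, $X_1^-X_2^+=X_2^+X_1^-$; $\mathcal{A}_{\alpha_1,\alpha_2}(p_1,p_2)$ is its quotient by the ideal of all $a$ with $f(H)a=0$ for some nonzero polynomial $f$. TGWA: for a commutative-or-not unital $\mathbb{C}$-algebra $R$, commuting automorphisms $\sigma_i^{1/2}$ ($\sigma_i=(\sigma_i^{1/2})^2$) and central $t_i$, $\tilde{\mathcal{A}}(R,\boldsymbol{\sigma},\boldsymbol{t})$ is obtained from $R$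 by adjoining $X_i^\pm$ with $X_i^\pm r=\sigma_i^{\pm1}(r)X_i^\pm$, $X_i^\pm X_i^\mp=\sigma_i^{\pm1/2}(t_i)$, $[X_i^\pm,X_j^\mp]=0$ ($i\neq j$), graded by $\deg r=0$, $\deg X_i^\pm=\pm\mathbf{e}_i$; $\mathcal{A}(R,\boldsymbol{\sigma},\boldsymbol{t})$ is its quotient by the sum of all graded ideals intersecting $R$ trivially. Here $\sigma_i^{1/2}(u)=u-\alpha_i/2$. *)

(* Defs.v *)
From HB Require Import structures.
From mathcomp Require Import all_boot all_order all_algebra.
From mathcomp Require Import reals.
From mathcomp Require Export complex.
Set Implicit Arguments. Unset Strict Implicit. Unset Printing Implicit Defensive.
Import Order.TTheory GRing.Theory Num.Theory.
Local Open Scope ring_scope.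

Section KleinTGWA.
Variable F : fieldType.

Definition peval (A : algType F) (p : {poly F}) (a : A) : A := horner_alg a p.

Definition is_ideal (A : algType F) (J : A -> Prop) : Prop :=
  [/\ J 0,
      (forall x y, J x -> J y -> J (x + y)),
      (forall (c : F) x, J x -> J (c *: x)) &
      (forall a x, J x -> J (a * x) /\ J (x * a))].

Definition KFP_rel (a1 a2 : F) (p1 p2 : {poly F}) (B : algType F)
    (H X1p X1m X2p X2m : B) : Prop :=
  H * X1p - X1p * H = a1 *: X1p/\
      H * X1m - X1m * H = - (a1 *: X1m)/\
      H * X2p - X2p * H = a2 *: X2p/\
      H * X2m - X2m * H = - (a2 *: X2m)/\
      X1p * X1m = peval p1 (H - (a1 / 2%:R)%:A)/\
      X1m * X1p = peval p1 (H + (a1 / 2%:R)%:A)/\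
      X2p * X2m = peval p2 (H - (a2 / 2%:R)%:A)/\
      X2m * X2p = peval p2 (H + (a2 / 2%:R)%:A)/\
      X1p * X2m = X2m * X1p /\
      X1m * X2p = X2p * X1m.

(* (A; H, X1+, X1-, X2+, X2-) is the algebra presented by the generators
   H, X_i^± and the relations above: universal property. *)
Definition KFP_presentation (a1 a2 : F) (p1 p2 : {poly F}) (A : algType F)
    (H X1p X1m X2p X2m : A) : Prop :=
  KFP_rel a1 a2 p1 p2 H X1p X1m X2p X2m /\
  forall (B : algType F) (H' X1p' X1m' X2p' X2m' : B),
    KFP_rel a1 a2 p1 p2 H' X1p' X1m' X2p' X2m' ->
    (exists f : {lrmorphism A -> B},
        [/\ f H = H', f X1p = X1p', f X1m = X1m', f X2p = X2p' & f X2m = X2m'])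
    /\ (forall f g : {lrmorphism A -> B},
          f H = g H -> f X1p = g X1p -> f X1m = g X1m ->
          f X2p = g X2p -> f X2m = g X2m -> f =1 g).

Definition KFP_quotient (At : algType F) (H : At) (Q : algType F)
    (pi : {lrmorphism At -> Q}) : Prop :=
  (forall y : Q, exists x : At, pi x = y) /\
  forall a : At, pi a = 0 <-> exists f : {poly F}, f != 0 /\ peval f H * a = 0.

(* The TGWA ~A(R, sigma, t) with R = F[u], sigma_i(u) = u - a_i,       *)
(* sigma_i^{1/2}(u) = u - a_i/2, t = (t1, t2).                         *)
(* The copy of R in the algebra is the image of r |-> r(U).            *)

Definition shiftp (c : F) (r : {poly F}) : {poly F} := r \Po ('X - c%:P).

Definition TGWA_rel (a1 a2 : F) (t1 t2 : {poly F}) (B : algType F)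
    (U X1p X1m X2p X2m : B) : Prop :=
  (forall r : {poly F},
         [/\ X1p * peval r U = peval (shiftp a1 r) U * X1p,
             X1m * peval r U = peval (shiftp (- a1) r) U * X1m,
             X2p * peval r U = peval (shiftp a2 r) U * X2p &
             X2m * peval r U = peval (shiftp (- a2) r) U * X2m]) /\
      X1p * X1m = peval (shiftp (a1 / 2%:R) t1) U /\
      X1m * X1p = peval (shiftp (- (a1 / 2%:R)) t1) U /\
      X2p * X2m = peval (shiftp (a2 / 2%:R) t2) U /\
      X2m * X2p = peval (shiftp (- (a2 / 2%:R)) t2) U /\
      X1p * X2m = X2m * X1p /\
      X1m * X2p = X2p * X1m.

Definition TGWA_presentation (a1 a2 : F) (t1 t2 : {poly F}) (A : algType F)
    (U X1p X1m X2p X2m : A) : Prop :=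
  TGWA_rel a1 a2 t1 t2 U X1p X1m X2p X2m /\
  forall (B : algType F) (U' X1p' X1m' X2p' X2m' : B),
    TGWA_rel a1 a2 t1 t2 U' X1p' X1m' X2p' X2m' ->
    (exists f : {lrmorphism A -> B},
        [/\ f U = U', f X1p = X1p', f X1m = X1m', f X2p = X2p' & f X2m = X2m'])
    /\ (forall f g : {lrmorphism A -> B},
          f U = g U -> f X1p = g X1p -> f X1m = g X1m ->
          f X2p = g X2p -> f X2m = g X2m -> f =1 g).

Inductive tgen := GU | GX1p | GX1m | GX2p | GX2m.

Definition tgen_deg (x : tgen) : int * int :=
  match x with
  | GU => (0, 0) | GX1p => (1, 0) | GX1m => (-1, 0)
  | GX2p => (0, 1) | GX2m => (0, -1)
  end.

Definition word_deg (w : seq tgen) : int * int :=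
  foldr (fun x d => ((tgen_deg x).1 + d.1, (tgen_deg x).2 + d.2)) (0, 0) w.

Definition tgen_val (A : algType F) (U X1p X1m X2p X2m : A) (x : tgen) : A :=
  match x with
  | GU => U | GX1p => X1p | GX1m => X1m | GX2p => X2p | GX2m => X2m
  end.

Definition word_val (A : algType F) (U X1p X1m X2p X2m : A) (w : seq tgen) : A :=
  \prod_(x <- w) tgen_val U X1p X1m X2p X2m x.

Definition homogeneous (A : algType F) (U X1p X1m X2p X2m : A)
    (g : int * int) (a : A) : Prop :=
  exists (ws : seq (seq tgen)) (cs : seq F),
    all (fun w => word_deg w == g) ws /\
    a = \sum_(k < size ws) cs`_k *: word_val U X1p X1m X2p X2m (nth [::] ws k).

Definition graded_ideal (A : algType F) (U X1p X1m X2p X2m : A)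
    (J : A -> Prop) : Prop :=
  is_ideal J /\
  forall a, J a -> exists (s : seq (int * int)) (c : int * int -> A),
      uniq s /\ a = \sum_(g <- s) c g /\
      forall g, g \in s -> J (c g) /\ homogeneous U X1p X1m X2p X2m g (c g).

Definition meets_R_trivially (A : algType F) (U : A) (J : A -> Prop) : Prop :=
  forall r : {poly F}, J (peval r U) -> peval r U = 0.

Definition TGWA_kernel (A : algType F) (U X1p X1m X2p X2m : A) (a : A) : Prop :=
  exists s : seq A, a = \sum_(x <- s) x /\
    forall x, x \in s -> exists J : A -> Prop,
      [/\ graded_ideal U X1p X1m X2p X2m J, meets_R_trivially U J & J x].

Definition TGWA_quotient (At : algType F) (U X1p X1m X2p X2m : At)
    (T : algType F) (rho : {lrmorphism At -> T}) : Prop :=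
  (forall y : T, exists x : At, rho x = y) /\
  forall a : At, rho a = 0 <-> TGWA_kernel U X1p X1m X2p X2m a.

End KleinTGWA.

(* Main.v *)
Require Import Defs.
From HB Require Import structures.
From mathcomp Require Import all_boot all_order all_algebra.
From mathcomp Require Import reals complex boolp.
From mathcomp Require Import zify ring.
Set Implicit Arguments. Unset Strict Implicit. Unset Printing Implicit Defensive.
Import Order.TTheory GRing.Theory Num.Theory.
Local Open Scope ring_scope.
Section Generic.
Variable F : fieldType.
Implicit Types (A B : algType F) (p q r : {poly F}).

Lemma pevalM A p q (a : A) : peval (p * q) a = peval p a * peval q a.
Proof. by rewrite /peval rmorphM. Qed.
Lemma pevalD A p q (a : A) : peval (p + q) a = peval p a + peval q a.
Proof. by rewrite /peval rmorphD. Qed.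
Lemma pevalB A p q (a : A) : peval (p - q) a = peval p a - peval q a.
Proof. by rewrite /peval rmorphB. Qed.
Lemma pevalC A c (a : A) : peval c%:P a = c%:A.
Proof. exact: horner_algC. Qed.
Lemma pevalX A (a : A) : peval 'X a = a.
Proof. exact: horner_algX. Qed.
Lemma peval1 A (a : A) : peval 1 a = 1.
Proof. by rewrite /peval rmorph1. Qed.
Lemma peval0 A (a : A) : peval 0 a = 0.
Proof. by rewrite /peval rmorph0. Qed.
Lemma pevalZ A c p (a : A) : peval (c *: p) a = c *: peval p a.
Proof. by rewrite -mul_polyC pevalM pevalC mulr_algl. Qed.
Lemma pevalMC A p q (a : A) : peval p a * peval q a = peval q a * peval p a.
Proof. by rewrite -!pevalM mulrC. Qed.
Lemma pevalCX A c (a : A) : peval ('X - c%:P) a = a - c%:A.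
Proof. by rewrite pevalB pevalX pevalC. Qed.

Lemma lrmorph_peval A B (f : {lrmorphism A -> B}) p a : f (peval p a) = peval p (f a).
Proof.
elim/poly_ind: p => [|p c IH]; first by rewrite !peval0 rmorph0.
rewrite !pevalD !pevalM !pevalX !pevalC rmorphD rmorphM. by congr (_ * _ + _); [exact: IH | exact: rmorph_alg].
Qed.

Lemma rmorph_peval A B (f : {rmorphism A -> B}) (Hs : forall c : F, f c%:A = c%:A) p a :
  f (peval p a) = peval p (f a).
Proof.
elim/poly_ind: p => [|p c IH]; first by rewrite !peval0 rmorph0.
by rewrite !pevalD !pevalM !pevalX !pevalC rmorphD rmorphM IH Hs.
Qed.

Lemma lrM A B (f : {lrmorphism A -> B}) (x y : A) : f (x * y) = f x * f y.
Proof. exact: rmorphM. Qed.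
Lemma lrD A B (f : {lrmorphism A -> B}) (x y : A) : f (x + y) = f x + f y.
Proof. exact: rmorphD. Qed.
Lemma lrB A B (f : {lrmorphism A -> B}) (x y : A) : f (x - y) = f x - f y.
Proof. exact: rmorphB. Qed.
Lemma lr0 A B (f : {lrmorphism A -> B}) : f 0 = 0.
Proof. exact: rmorph0. Qed.
Lemma lr1 A B (f : {lrmorphism A -> B}) : f 1 = 1.
Proof. exact: rmorph1. Qed.
Lemma lrZ A B (f : {lrmorphism A -> B}) (c : F) (x : A) : f (c *: x) = c *: f x.
Proof. exact: linearZ. Qed.
Lemma lr_sum A B (f : {lrmorphism A -> B}) I (r : seq I) (G : I -> A) :
  f (\sum_(i <- r) G i) = \sum_(i <- r) f (G i).
Proof. exact: rmorph_sum. Qed.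

Lemma peval_comp A p q (a : A) : peval (p \Po q) a = peval p (peval q a).
Proof.
elim/poly_ind: p => [|p c IH]; first by rewrite comp_poly0 !peval0.
by rewrite comp_polyD comp_polyM comp_polyX comp_polyC !pevalD !pevalM IH !pevalC pevalX.
Qed.

Lemma peval_shift A c p (a : A) : peval (shiftp c p) a = peval p (a - c%:A).
Proof. by rewrite /shiftp peval_comp pevalCX. Qed.

Lemma shiftp_eq0 c p : (shiftp c p == 0) = (p == 0).
Proof. by rewrite /shiftp comp_poly_eq0 // size_XsubC. Qed.

Lemma shiftpM c p q : shiftp c (p * q) = shiftp c p * shiftp c q.
Proof. exact: comp_polyM. Qed.

Lemma comm_peval A (x h : A) c : x * h = (h - c%:A) * x ->
  forall r, x * peval r h = peval (shiftp c r) h * x.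
Proof.
move=> Hx r; elim/poly_ind: r => [|r k IH].
  by rewrite /shiftp comp_poly0 !peval0 mulr0 mul0r.
rewrite /shiftp comp_polyD comp_polyM comp_polyX comp_polyC -/(shiftp c r).
rewrite !pevalD !pevalM !pevalC pevalX pevalCX mulrDr mulrA IH -mulrA Hx.
by rewrite mulrA mulr_algr mulrDl mulr_algl.
Qed.

End Generic.
Section Span.
Variable F : fieldType.
Variables (Tt : algType F) (U Y1p Y1m Y2p Y2m : Tt).
Local Notation wv := (word_val U Y1p Y1m Y2p Y2m).
Local Notation tv := (tgen_val U Y1p Y1m Y2p Y2m).

Definition lv (l : seq (F * seq tgen)) : Tt := \sum_(p <- l) p.1 *: wv p.2.

Lemma wv_nil : wv [::] = 1. Proof. by rewrite /word_val big_nil. Qed.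
Lemma wv_cons x w : wv (x :: w) = tv x * wv w.
Proof. by rewrite /word_val big_cons. Qed.
Lemma wv_cat w1 w2 : wv (w1 ++ w2) = wv w1 * wv w2.
Proof. by rewrite /word_val big_cat. Qed.
Lemma wv1 x : wv [:: x] = tv x.
Proof. by rewrite wv_cons wv_nil mulr1. Qed.

Lemma lv_nil : lv [::] = 0. Proof. by rewrite /lv big_nil. Qed.
Lemma lv_cons p l : lv (p :: l) = p.1 *: wv p.2 + lv l.
Proof. by rewrite /lv big_cons. Qed.
Lemma lv_cat l1 l2 : lv (l1 ++ l2) = lv l1 + lv l2.
Proof. by rewrite /lv big_cat. Qed.
Lemma lv_scale c l : lv [seq (c * p.1, p.2) | p <- l] = c *: lv l.
Proof. by rewrite /lv big_map scaler_sumr; apply: eq_bigr => p _; rewrite scalerA. Qed.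
Lemma lv_mul l1 l2 : lv [seq (p.1 * q.1, p.2 ++ q.2) | p <- l1, q <- l2] = lv l1 * lv l2.
Proof.
rewrite /lv big_allpairs_dep mulr_suml; apply: eq_bigr => p _.
rewrite mulr_sumr; apply: eq_bigr => q _.
by rewrite wv_cat -scalerAl -scalerAr scalerA.
Qed.
Lemma lv1 x : lv [:: (1, [:: x])] = tv x.
Proof. by rewrite lv_cons lv_nil addr0 scale1r wv1. Qed.

Definition spanP (x : Tt) : Prop := exists l, x = lv l.
Definition spanB : {pred Tt} := fun x => `[< spanP x >].

Lemma spanBP x : reflect (spanP x) (x \in spanB).
Proof. exact: asboolP. Qed.

Lemma spanB_closed : GRing.subsemialg_closed spanB.
Proof.
split.
- apply/spanBP; exists [:: (1, [::])]; by rewrite lv_cons lv_nil addr0 scale1r wv_nil.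
- split; first by apply/spanBP; exists [::]; rewrite lv_nil.
  move=> x y /spanBP[l1 ->] /spanBP[l2 ->]; apply/spanBP; exists (l1 ++ l2); by rewrite lv_cat.
- move=> c x /spanBP[l ->]; apply/spanBP; exists [seq (c * p.1, p.2) | p <- l]; by rewrite lv_scale.
- move=> x y /spanBP[l1 ->] /spanBP[l2 ->]; apply/spanBP; exists [seq (p.1 * q.1, p.2 ++ q.2) | p <- l1, q <- l2]; by rewrite lv_mul.
Qed.

Record spanT := SpanT { spanv : Tt; _ : spanv \in spanB }.
HB.instance Definition _ := [isSub for spanv].
HB.instance Definition _ := [Choice of spanT by <:].
HB.instance Definition _ := GRing.SubChoice_isSubAlgebra.Build F Tt spanB spanT spanB_closed.

Definition sv (x : spanT) : Tt := val x.
HB.instance Definition _ := GRing.RMorphism.copy sv val.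
HB.instance Definition _ := GRing.Linear.copy sv val.
End Span.

Section Transport.
Variable F : fieldType.
Variables (a1 a2 : F) (t1 t2 : {poly F}).

Lemma TGWA_rel_inj (A B : algType F) (f : {lrmorphism A -> B}) (u x1 x2 x3 x4 : A) :
  injective f -> TGWA_rel a1 a2 t1 t2 (f u) (f x1) (f x2) (f x3) (f x4) ->
  TGWA_rel a1 a2 t1 t2 u x1 x2 x3 x4.
Proof.
move=> fI [Hr [E1 [E2 [E3 [E4 [E5 E6]]]]]].
split; last split; last split; last split; last split; last split.
- move=> r; have [G1 G2 G3 G4] := Hr r.
  by split; apply: fI; rewrite !rmorphM !(rmorph_peval (rmorph_alg f)).
- by apply: fI; rewrite rmorphM (rmorph_peval (rmorph_alg f)).
- by apply: fI; rewrite rmorphM (rmorph_peval (rmorph_alg f)).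
- by apply: fI; rewrite rmorphM (rmorph_peval (rmorph_alg f)).
- by apply: fI; rewrite rmorphM (rmorph_peval (rmorph_alg f)).
- by apply: fI; rewrite !rmorphM.
- by apply: fI; rewrite !rmorphM.
Qed.
Lemma TGWA_rel_scale (A : algType F) (u x1 x2 x3 x4 : A) (c d : F) :
  c != 0 -> d != 0 -> TGWA_rel a1 a2 t1 t2 u x1 x2 x3 x4 ->
  TGWA_rel a1 a2 t1 t2 u (c *: x1) (c^-1 *: x2) (d *: x3) (d^-1 *: x4).
Proof.
move=> c0 d0 [Hr [E1 [E2 [E3 [E4 [E5 E6]]]]]].
split; last split; last split; last split; last split; last split.
- move=> r; have [G1 G2 G3 G4] := Hr r.
  by split; rewrite -scalerAl ?G1 ?G2 ?G3 ?G4 scalerAr.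
- by rewrite -scalerAl -scalerAr scalerA mulfV // scale1r.
- by rewrite -scalerAl -scalerAr scalerA mulVf // scale1r.
- by rewrite -scalerAl -scalerAr scalerA mulfV // scale1r.
- by rewrite -scalerAl -scalerAr scalerA mulVf // scale1r.
- by rewrite -!scalerAl -!scalerAr !scalerA E5 mulrC.
- by rewrite -!scalerAl -!scalerAr !scalerA E6 mulrC.
Qed.
End Transport.

Section Vanish.
Variable F : numFieldType.

Lemma two_expz_inj (m n : int) : (2%:R : F) ^ m = 2%:R ^ n -> m = n.
Proof.
move=> E; have h2 : (2%:R : F) != 0 by rewrite pnatr_eq0.
have E1 : (2%:R : F) ^ (m - n) = 1.
  apply: (mulIf (expfz_neq0 n h2)); rewrite -expfzDr // subrK mul1r; exact: E.
move/eqP: E1; rewrite pexprz_eq1 ?ler0n // pnatr_eq1 orbF subr_eq0.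
by move/eqP.
Qed.

Lemma vanish (V : lmodType F) (K : eqType) (s : seq K) (e : K -> int) (c : K -> V) :
  uniq (map e s) ->
  (forall mu : F, mu != 0 -> \sum_(k <- s) mu ^ (e k) *: c k = 0) ->
  forall k, k \in s -> c k = 0.
Proof.
elim: s c => [|k0 s IH] c //= /andP[k0ns us] H.
have h2 : (2%:R : F) != 0 by rewrite pnatr_eq0.
have Hprem : forall mu : F, mu != 0 ->
    \sum_(k <- s) mu ^ (e k) *: (((2%:R : F) ^ (e k) - 2%:R ^ (e k0)) *: c k) = 0.
  move=> mu mu0.
  have E1 := H (2%:R * mu) (mulf_neq0 h2 mu0); have E2 := H mu mu0.
  rewrite big_cons in E1; rewrite big_cons in E2.
  have : (2%:R * mu) ^ (e k0) *: c k0 + \sum_(j <- s) (2%:R * mu) ^ e j *: c j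
      - (2%:R : F) ^ (e k0) *: (mu ^ e k0 *: c k0 + \sum_(j <- s) mu ^ e j *: c j) = 0.
    by rewrite E1 E2 scaler0 subr0.
  rewrite scalerDr expfzMl scalerA opprD addrACA subrr add0r scaler_sumr -sumrB => E.
  apply: (etrans _ E); apply: eq_bigr => j _; rewrite expfzMl !scalerA -scalerBl; congr (_ *: _).
  by rewrite mulrBr mulrC [_ * mu ^ _]mulrC.
have tail : forall k, k \in s -> c k = 0.
  move=> k ks; have := IH _ us Hprem k ks.
  move/eqP; rewrite scaler_eq0 subr_eq0 => /orP[/eqP /two_expz_inj Ek | /eqP //].
  by move: k0ns; rewrite -Ek map_f.
move=> k; rewrite inE => /orP[/eqP ->|]; last exact: tail.
have := H 1 (oner_neq0 _); rewrite big_cons big_seq big1 ?addr0 ?exp1rz ?scale1r //.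
by move=> j js; rewrite tail // scaler0.
Qed.
End Vanish.

Section TGWA.
Variable F : numFieldType.
Variables (a1 a2 : F) (t1 t2 : {poly F}).
Hypotheses (t1nz : t1 != 0) (t2nz : t2 != 0).
Variables (Tt : algType F) (U Y1p Y1m Y2p Y2m : Tt).
Hypothesis Hpres : TGWA_presentation a1 a2 t1 t2 U Y1p Y1m Y2p Y2m.
Local Notation wv := (word_val U Y1p Y1m Y2p Y2m).
Local Notation tv := (tgen_val U Y1p Y1m Y2p Y2m).
Local Notation lv := (lv U Y1p Y1m Y2p Y2m).

Lemma spanning x : spanP U Y1p Y1m Y2p Y2m x.
Proof.
have inB (x0 : tgen) : tv x0 \in spanB U Y1p Y1m Y2p Y2m.
  by apply/spanBP; exists [:: (1, [:: x0])]; rewrite lv1.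
pose U' := SpanT (inB GU).
pose Y1p' := SpanT (inB GX1p).
pose Y1m' := SpanT (inB GX1m).
pose Y2p' := SpanT (inB GX2p).
pose Y2m' := SpanT (inB GX2m).
have rel' : TGWA_rel a1 a2 t1 t2 U' Y1p' Y1m' Y2p' Y2m'.
  have svI : injective (@sv _ _ U Y1p Y1m Y2p Y2m) by exact: val_inj.
  have H := @TGWA_rel_inj F a1 a2 t1 t2 _ _ (@sv _ _ U Y1p Y1m Y2p Y2m) U' Y1p' Y1m' Y2p' Y2m' svI.
  exact: (H Hpres.1).
have [[h [hU h1 h2 h3 h4]] _] := Hpres.2 _ _ _ _ _ _ rel'.
have [_ uniq] := Hpres.2 _ _ _ _ _ _ Hpres.1.
have E := uniq (@sv _ _ U Y1p Y1m Y2p Y2m \o h) idfun.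
have E' : (@sv _ _ U Y1p Y1m Y2p Y2m \o h) =1 idfun.
  by apply: E => /=; rewrite ?hU ?h1 ?h2 ?h3 ?h4.
have -> : x = @sv _ _ U Y1p Y1m Y2p Y2m (h x) by symmetry; exact: (E' x).
apply/spanBP; exact: valP.
Qed.


Implicit Types (r : {poly F}) (w : seq tgen) (b : Tt).
Definition dsh (x : tgen) : F :=
  match x with GU => 0 | GX1p => a1 | GX1m => - a1 | GX2p => a2 | GX2m => - a2 end.

Lemma shiftp0 r : shiftp 0 r = r.
Proof. by rewrite /shiftp subr0 comp_polyXr. Qed.

Lemma tv_comm x r : tv x * peval r U = peval (shiftp (dsh x) r) U * tv x.
Proof.
have [G1 G2 G3 G4] := Hpres.1.1 r.
case: x => //=; by rewrite shiftp0; have := pevalMC 'X r U; rewrite pevalX.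
Qed.

Lemma wv_comm w r : exists r', (r' == 0) = (r == 0) /\ wv w * peval r U = peval r' U * wv w.
Proof.
elim: w r => [|x w IH] r; first by exists r; rewrite wv_nil mul1r mulr1.
have [r' [E1 E2]] := IH r.
exists (shiftp (dsh x) r'); split; first by rewrite shiftp_eq0.
by rewrite wv_cons -mulrA E2 mulrA tv_comm mulrA.
Qed.

Definition tor (b : Tt) := exists f : {poly F}, f != 0 /\ peval f U * b = 0.

Lemma tor0 : tor 0.
Proof. by exists 1; rewrite oner_neq0 mulr0. Qed.

Lemma tor_add b (c : Tt) : tor b -> tor c -> tor (b + c).
Proof.
move=> [f [fn Hf]] [g [gn Hg]]; exists (f * g); split; first by rewrite mulf_neq0.
by rewrite mulrDr {1}mulrC !pevalM -!mulrA Hf Hg !mulr0 addr0.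
Qed.

Lemma tor_scale (c : F) b : tor b -> tor (c *: b).
Proof. by move=> [f [fn Hf]]; exists f; split => //; rewrite -scalerAr Hf scaler0. Qed.

Lemma tor_mulr b (a : Tt) : tor b -> tor (b * a).
Proof. by move=> [f [fn Hf]]; exists f; split => //; rewrite mulrA Hf mul0r. Qed.

Lemma tor_tv x b : tor b -> tor (tv x * b).
Proof.
move=> [f [fn Hf]]; exists (shiftp (dsh x) f); split; first by rewrite shiftp_eq0.
by rewrite mulrA -tv_comm -mulrA Hf mulr0.
Qed.

Lemma tor_wv w b : tor b -> tor (wv w * b).
Proof.
elim: w => [|x w IH] Hb; first by rewrite wv_nil mul1r.
by rewrite wv_cons -mulrA; apply: tor_tv; apply: IH.
Qed.

Lemma tor_lv l b : tor b -> tor (lv l * b).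
Proof.
move=> Hb; elim: l => [|p l IH]; first by rewrite lv_nil mul0r; exact: tor0.
by rewrite lv_cons mulrDl; apply: tor_add => //; rewrite -scalerAl; apply: tor_scale; apply: tor_wv.
Qed.

Lemma tor_mull (a : Tt) b : tor b -> tor (a * b).
Proof. by have [l ->] := spanning a; exact: tor_lv. Qed.

Lemma tor_ideal : is_ideal tor.
Proof.
split; [exact: tor0 | exact: tor_add | exact: tor_scale |].
by move=> a x Hx; split; [exact: tor_mull | exact: tor_mulr].
Qed.


Lemma rel1pm : Y1p * Y1m = peval (shiftp (a1 / 2%:R) t1) U.
Proof. by have [_ [E _]] := Hpres.1. Qed.
Lemma rel1mp : Y1m * Y1p = peval (shiftp (- (a1 / 2%:R)) t1) U.
Proof. by have [_ [_ [E _]]] := Hpres.1. Qed.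
Lemma rel2pm : Y2p * Y2m = peval (shiftp (a2 / 2%:R) t2) U.
Proof. by have [_ [_ [_ [E _]]]] := Hpres.1. Qed.
Lemma rel2mp : Y2m * Y2p = peval (shiftp (- (a2 / 2%:R)) t2) U.
Proof. by have [_ [_ [_ [_ [E _]]]]] := Hpres.1. Qed.
Lemma rel1p2m : Y1p * Y2m = Y2m * Y1p.
Proof. by have [_ [_ [_ [_ [_ [E _]]]]]] := Hpres.1. Qed.
Lemma rel1m2p : Y1m * Y2p = Y2p * Y1m.
Proof. by have [_ [_ [_ [_ [_ [_ E]]]]]] := Hpres.1. Qed.

Definition RC (x : Tt) := forall r, exists r', x * peval r U = peval r' U * x.
Lemma RC1 : RC 1.
Proof. by move=> r; exists r; rewrite mul1r mulr1. Qed.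
Lemma RCM x y : RC x -> RC y -> RC (x * y).
Proof.
move=> Hx Hy r; have [r1 E1] := Hy r; have [r2 E2] := Hx r1.
by exists r2; rewrite -mulrA E1 mulrA E2 mulrA.
Qed.
Lemma RCtv x : RC (tv x).
Proof. by move=> r; exists (shiftp (dsh x) r); exact: tv_comm. Qed.
Lemma RCexp x n : RC x -> RC (x ^+ n).
Proof. by move=> H; elim: n => [|n IH]; [rewrite expr0; exact: RC1 | rewrite exprS; exact: RCM]. Qed.
Lemma RCpeval r : RC (peval r U).
Proof. by move=> r0; exists r0; rewrite pevalMC. Qed.

Definition P2 (d : int) : Tt := match d with Posz n => Y2p ^+ n | Negz n => Y2m ^+ n.+1 end.
Definition X1 (b : bool) : Tt := if b then Y1p else Y1m.
Fixpoint nfr (b : bool) (ds : seq int) : Tt :=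
  match ds with [::] => 1 | d :: ds' => X1 b * P2 d * nfr b ds' end.

Lemma RCP2 d : RC (P2 d).
Proof. by case: d => n /=; apply: RCexp; [exact: (RCtv GX2p) | exact: (RCtv GX2m)]. Qed.
Lemma RCX1 (b : bool) : RC (X1 b).
Proof. by case: b; [exact: (RCtv GX1p) | exact: (RCtv GX1m)]. Qed.
Lemma RCnfr (b : bool) ds : RC (nfr b ds).
Proof. elim: ds => [|d ds IH] /=; [exact: RC1 | by apply: RCM => //; apply: RCM; [exact: RCX1 | exact: RCP2]]. Qed.

Lemma P2_0 : P2 0 = 1. Proof. by rewrite /= expr0. Qed.

Lemma P2p_mul d : exists r, Y2p * P2 d = peval r U * P2 (d + 1).
Proof.
case: d => n.
  exists 1; rewrite peval1 mul1r.
  have -> : (Posz n + 1) = Posz n.+1 by lia.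
  by rewrite /= exprS.
exists (shiftp (a2 / 2%:R) t2); rewrite /= exprS mulrA rel2pm; congr (_ * _).
case: n => [|n].
  by have -> : Negz 0 + 1 = 0 by rewrite NegzE; lia.
by have -> : Negz n.+1 + 1 = Negz n by rewrite !NegzE; lia.
Qed.

Lemma P2m_mul d : exists r, Y2m * P2 d = peval r U * P2 (d - 1).
Proof.
case: d => [[|n]|n].
- by exists 1; rewrite peval1 mul1r /= expr1 mulr1.
- exists (shiftp (- (a2 / 2%:R)) t2); rewrite /= exprS mulrA rel2mp; congr (_ * _).
  by rewrite subn1.
- exists 1; rewrite peval1 mul1r /= -exprS.
  by rewrite addn0.
Qed.


Lemma Y2p_pow n e : exists r, Y2p ^+ n * P2 e = peval r U * P2 (n%:Z + e).
Proof.
elim: n e => [|n IH] e; first by exists 1; rewrite expr0 mul1r peval1 mul1r add0r.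
have [r1 E1] := IH e; have [r2 E2] := P2p_mul (n%:Z + e); have [r3 E3] := RCtv GX2p r1.
exists (r3 * r2); rewrite exprS -mulrA E1 mulrA [Y2p * _]E3 -mulrA [Y2p * _]E2 mulrA -pevalM.
by congr (_ * P2 _); lia.
Qed.

Lemma Y2m_pow n e : exists r, Y2m ^+ n * P2 e = peval r U * P2 (e - n%:Z).
Proof.
elim: n e => [|n IH] e; first by exists 1; rewrite expr0 mul1r peval1 mul1r subr0.
have [r1 E1] := IH e; have [r2 E2] := P2m_mul (e - n%:Z); have [r3 E3] := RCtv GX2m r1.
exists (r3 * r2); rewrite exprS -mulrA E1 mulrA [Y2m * _]E3 -mulrA [Y2m * _]E2 mulrA -pevalM.
by congr (_ * P2 _); lia.
Qed.

Lemma P2_mul d e : exists r, P2 d * P2 e = peval r U * P2 (d + e).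
Proof.
case: d => n /=; first exact: Y2p_pow.
have [r E] := Y2m_pow n.+1 e; exists r; rewrite E; congr (_ * P2 _); rewrite NegzE; lia.
Qed.

Lemma comm1m2p n : Y1m * Y2p ^+ n = Y2p ^+ n * Y1m.
Proof. elim: n => [|n IH]; first by rewrite expr0 mulr1 mul1r.
by rewrite exprS mulrA rel1m2p -mulrA IH mulrA. Qed.
Lemma comm1p2m n : Y1p * Y2m ^+ n = Y2m ^+ n * Y1p.
Proof. elim: n => [|n IH]; first by rewrite expr0 mulr1 mul1r.
by rewrite exprS mulrA rel1p2m -mulrA IH mulrA. Qed.

Lemma X1_cancel (b : bool) d : exists r, X1 (~~ b) * P2 d * X1 b = peval r U * P2 d.
Proof.
case: b; case: d => n /=.
- have [r E] := RCP2 (Posz n) (shiftp (- (a1 / 2%:R)) t1).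
  by exists r; rewrite comm1m2p -mulrA rel1mp; exact: E.
- by exists (shiftp (- (a1 / 2%:R)) t1); rewrite -mulrA -comm1p2m mulrA rel1mp.
- by exists (shiftp (a1 / 2%:R) t1); rewrite -mulrA -comm1m2p mulrA rel1pm.
- have [r E] := RCP2 (Negz n) (shiftp (a1 / 2%:R) t1).
  by exists r; rewrite comm1p2m -mulrA rel1pm; exact: E.
Qed.


Definition sgn (b : bool) : int := if b then 1 else -1.

Lemma word_deg_cons x w : word_deg (x :: w) =
  ((tgen_deg x).1 + (word_deg w).1, (tgen_deg x).2 + (word_deg w).2).
Proof. by []. Qed.

Lemma nf_X1 (b' b : bool) d0 ds : exists r (b'' : bool) d0' ds',
  X1 b' * (P2 d0 * nfr b ds) = peval r U * (P2 d0' * nfr b'' ds') /\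
  (sgn b' + sgn b * (size ds)%:Z, 0 + (d0 + \sum_(d <- ds) d)) =
  (sgn b'' * (size ds')%:Z, d0' + \sum_(d <- ds') d).
Proof.
case: ds => [|d1 ds'].
  exists 1, b', 0, [:: d0]; rewrite peval1 P2_0 !mul1r /= mulr1 !big_cons !big_nil.
  split; [by rewrite mulr1 | by [] || (congr (_, _); case: b; case: b' => /=; lia)].
case: (b' =P b) => [<-|nb].
  exists 1, b', 0, [:: d0, d1 & ds']; rewrite peval1 P2_0 !mul1r /= mulrA.
  by split => //; rewrite !big_cons; congr (_, _); case: b' => /=; lia.
have Eb : b' = ~~ b by case: b b' nb => [] [].
rewrite {}Eb; clear nb.
have [r E] := X1_cancel b d0; have [r' E'] := P2_mul d0 d1.
exists (r * r'), b, (d0 + d1), ds'; split.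
  by rewrite /= !mulrA E -(mulrA (peval r U)) E' pevalM !mulrA.
by rewrite !big_cons /=; congr (_, _); clear E E'; case: b => /=; lia.
Qed.

Lemma nf_step x (b : bool) d0 ds : exists r (b' : bool) d0' ds',
  tv x * (P2 d0 * nfr b ds) = peval r U * (P2 d0' * nfr b' ds') /\
  ((tgen_deg x).1 + sgn b * (size ds)%:Z, (tgen_deg x).2 + (d0 + \sum_(d <- ds) d)) =
  (sgn b' * (size ds')%:Z, d0' + \sum_(d <- ds') d).
Proof.
case: x.
- exists 'X, b, d0, ds; rewrite /= pevalX; split => //.
  by rewrite !add0r.
- exact: (nf_X1 true).
- exact: (nf_X1 false).
- have [r E] := P2p_mul d0; exists r, b, (d0 + 1), ds; split.
    by rewrite /= mulrA E -mulrA.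
  by rewrite /=; congr (_, _); lia.
- have [r E] := P2m_mul d0; exists r, b, (d0 - 1), ds; split.
    by rewrite /= mulrA E -mulrA.
  by rewrite /=; congr (_, _); lia.
Qed.

Lemma nf_exists w : exists r (b : bool) d0 ds,
  wv w = peval r U * (P2 d0 * nfr b ds) /\
  word_deg w = (sgn b * (size ds)%:Z, d0 + \sum_(d <- ds) d).
Proof.
elim: w => [|x w [r [b [d0 [ds [E D]]]]]].
  exists 1, true, 0, [::]; rewrite wv_nil peval1 P2_0 /= !mul1r big_nil; split => //.
have [r1 E1] := RCtv x r.
have [r2 [b' [d0' [ds' [E2 D2]]]]] := nf_step x b d0 ds.
exists (r1 * r2), b', d0', ds'; split.
  by rewrite wv_cons E mulrA E1 -mulrA E2 pevalM mulrA.
by rewrite word_deg_cons D.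
Qed.

Lemma wv_deg0 w : word_deg w = (0, 0) -> exists r, wv w = peval r U.
Proof.
have [r [b [d0 [ds [E D]]]]] := nf_exists w; rewrite D => -[D1 D2].
have /eqP : size ds = 0%N by move: D1; clear E D; case: b => /=; lia.
rewrite size_eq0 => /eqP Eds; move: D2 E; rewrite Eds big_nil addr0 => -> ->.
by exists r; rewrite P2_0 /= !mulr1.
Qed.


Local Notation homog := (homogeneous U Y1p Y1m Y2p Y2m).

Lemma homog_lv g l : all (fun p => word_deg p.2 == g) l -> homog g (lv l).
Proof.
move=> Hl; exists (map snd l), (map fst l); split; first by rewrite all_map.
rewrite /lv (big_nth (0, [::])) big_mkord size_map.
apply: eq_bigr => k _; have Hk := ltn_ord k.
by rewrite (nth_map (0, [::]) 0) // (nth_map (0, [::]) [::]).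
Qed.

Lemma homog_lv_inv g c : homog g c -> exists l, all (fun p => word_deg p.2 == g) l /\ c = lv l.
Proof.
move=> [ws [cs [Hall ->]]].
exists [seq (cs`_k, nth [::] ws k) | k <- iota 0 (size ws)]; split.
  rewrite all_map; apply/allP => k; rewrite mem_iota add0n => /andP[_ Hk] /=.
  by move/all_nthP: Hall; apply.
by rewrite /lv big_map -(big_mkord xpredT (fun k => cs`_k *: wv (nth [::] ws k))) /index_iota subn0.
Qed.

Lemma lv_tv x l : tv x * lv l = lv [seq (p.1, x :: p.2) | p <- l].
Proof.
rewrite /lv big_map mulr_sumr; apply: eq_bigr => p _.
by rewrite -scalerAr wv_cons.
Qed.

Lemma lv_deg0 l : all (fun p => word_deg p.2 == (0, 0)) l -> exists r, lv l = peval r U.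
Proof.
elim: l => [|p l IH] /=; first by exists 0; rewrite lv_nil peval0.
move=> /andP[/eqP Hp Hl]; have [r Er] := IH Hl; have [r' Er'] := wv_deg0 Hp.
by exists (p.1 *: r' + r); rewrite lv_cons Er Er' pevalD pevalZ.
Qed.

Lemma tor_step x y t' c : t' != 0 -> tv y * tv x = peval t' U -> tor (tv x * c) -> tor c.
Proof.
move=> tn Et [f [fn Hf]]; exists (shiftp (dsh y) f * t'); split.
  by rewrite mulf_neq0 // shiftp_eq0.
by rewrite pevalM -Et !mulrA -tv_comm -!mulrA Hf !mulr0.
Qed.

Lemma J_tor (J : Tt -> Prop) : is_ideal J -> meets_R_trivially U J ->
  forall n g c, (absz g.1 + absz g.2 <= n)%N -> J c -> homog g c -> tor c.
Proof.
move=> [J0 JD JZ JM] JR n; elim: n => [|n IH] g c Hn Jc Hc.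
  have Eg : g = (0, 0) by move: Hn; clear Hc; case: g => g1 g2 /= Hn; congr (_, _); lia.
  move: Hc; rewrite Eg => /homog_lv_inv[l [Hl El]].
  have [r Er] := lv_deg0 Hl; have := JR r; rewrite -Er -El => /(_ Jc) ->; exact: tor0.
have step x y (t' : {poly F}) : t' != 0 -> tv y * tv x = peval t' U ->
    (absz ((tgen_deg x).1 + g.1)%R + absz ((tgen_deg x).2 + g.2)%R <= n)%N -> tor c.
  move=> tn Et Hm; apply: (tor_step tn Et).
  apply: (IH ((tgen_deg x).1 + g.1, (tgen_deg x).2 + g.2)) => //.
    exact: (JM (tv x) c Jc).1.
  have [l [Hl El]] := homog_lv_inv Hc; rewrite El lv_tv; apply: homog_lv.
  rewrite all_map; apply: sub_all Hl => p /eqP Hp.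
  by apply/eqP; rewrite -Hp.
case: g Hn Hc step => g1 g2 /= Hn Hc step.
have [g1p|g1n|g10] := ltrgtP 0 g1.
- apply: (step GX1m GX1p (shiftp (a1 / 2%:R) t1)) => /=; first by rewrite shiftp_eq0.
    exact: rel1pm.
  lia.
- apply: (step GX1p GX1m (shiftp (- (a1 / 2%:R)) t1)) => /=; first by rewrite shiftp_eq0.
    exact: rel1mp.
  lia.
have [g2p|g2n|g20] := ltrgtP 0 g2.
- apply: (step GX2m GX2p (shiftp (a2 / 2%:R) t2)) => /=; first by rewrite shiftp_eq0.
    exact: rel2pm.
  lia.
- apply: (step GX2p GX2m (shiftp (- (a2 / 2%:R)) t2)) => /=; first by rewrite shiftp_eq0.
    exact: rel2mp.
  lia.
move: Hc; rewrite -g10 -g20 => /homog_lv_inv[l [Hl El]].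
have [r Er] := lv_deg0 Hl; have := JR r; rewrite -Er -El => /(_ Jc) ->; exact: tor0.
Qed.

Lemma tor_sum (s : seq Tt) : (forall x, x \in s -> tor x) -> tor (\sum_(x <- s) x).
Proof.
elim: s => [|y s IH] H; first by rewrite big_nil; exact: tor0.
rewrite big_cons; apply: tor_add; first by apply: H; rewrite inE eqxx.
by apply: IH => z Hz; apply: H; rewrite inE Hz orbT.
Qed.

Lemma kernel_tor b : TGWA_kernel U Y1p Y1m Y2p Y2m b -> tor b.
Proof.
move=> [s [-> Hs]]; apply: tor_sum => x /Hs [J [[Jid Jgr] JR Jx]].
have [S [c [uS [-> Hc]]]] := Jgr x Jx.
elim: S uS Hc => [|g S IHS] uS Hc; first by rewrite big_nil; exact: tor0.
rewrite big_cons; apply: tor_add.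
  have [Jg Hg] := Hc g (mem_head _ _).
  exact: (J_tor Jid JR (leqnn _) Jg Hg).
apply: IHS; first by case/andP: uS.
by move=> g' Hg'; apply: Hc; rewrite inE Hg' orbT.
Qed.


Definition eg (N : nat) (g : int * int) : int := g.1 + g.2 * N%:Z.

Lemma theta_ex (mu : F) (N : nat) : mu != 0 ->
  exists th : {lrmorphism Tt -> Tt}, forall x, th (tv x) = mu ^ (eg N (tgen_deg x)) *: tv x.
Proof.
move=> mu0; have muN0 : mu ^+ N != 0 by rewrite expf_neq0.
have rel := TGWA_rel_scale mu0 muN0 Hpres.1.
have [[th [hU h1 h2 h3 h4]] _] := Hpres.2 _ _ _ _ _ _ rel.
exists th; case => /=; rewrite /eg /=.
- by rewrite hU mul0r addr0 expr0z scale1r.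
- by rewrite h1 mul0r addr0 expr1z.
- by rewrite h2 mul0r addr0 -exprz_inv expr1z.
- by rewrite h3 add0r mul1r.
- by rewrite h4 add0r mulN1r -exprz_inv -exprVn.
Qed.

Lemma theta_wv (mu : F) (N : nat) (th : {lrmorphism Tt -> Tt}) : mu != 0 ->
  (forall x, th (tv x) = mu ^ (eg N (tgen_deg x)) *: tv x) ->
  forall w, th (wv w) = mu ^ (eg N (word_deg w)) *: wv w.
Proof.
move=> mu0 Hth; elim => [|x w IH].
  by rewrite wv_nil lr1 /eg /= mul0r addr0 expr0z scale1r.
rewrite wv_cons lrM Hth IH -scalerAl -scalerAr scalerA -expfzDr //.
by congr (_ ^ _ *: _); rewrite /eg word_deg_cons /=; ring.
Qed.

Lemma theta_lv (mu : F) (N : nat) (th : {lrmorphism Tt -> Tt}) g l : mu != 0 ->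
  (forall x, th (tv x) = mu ^ (eg N (tgen_deg x)) *: tv x) ->
  all (fun p => word_deg p.2 == g) l -> th (lv l) = mu ^ (eg N g) *: lv l.
Proof.
move=> mu0 Hth; elim: l => [|p l IH] /=; first by rewrite lv_nil lr0 scaler0.
move=> /andP[/eqP Hp Hl]; rewrite lv_cons lrD lrZ (theta_wv mu0 Hth) Hp IH //.
by rewrite scalerDr !scalerA mulrC.
Qed.

Lemma lv_part (S : seq (int * int)) l : uniq S ->
  all (fun p => word_deg p.2 \in S) l ->
  lv l = \sum_(g <- S) lv (filter (fun p => word_deg p.2 == g) l).
Proof.
move=> uS; elim: l => [|p l IH] /=; first by rewrite lv_nil big1 // => g _; rewrite lv_nil.
move=> /andP[Hp Hl].
have E g : lv (filter (fun p => word_deg p.2 == g) (p :: l)) =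
    (if word_deg p.2 == g then p.1 *: wv p.2 else 0) + lv (filter (fun p => word_deg p.2 == g) l).
  by rewrite /=; case: ifP => _; rewrite ?lv_cons ?add0r.
rewrite (eq_bigr _ (fun g _ => E g)) big_split /= -IH // lv_cons; congr (_ + _).
rewrite (bigD1_seq (word_deg p.2)) //= eqxx big1 ?addr0 // => g.
by rewrite eq_sym => /negbTE ->.
Qed.

Lemma comp_tor (f : {poly F}) l g : peval f U * lv l = 0 ->
  g \in undup [seq word_deg p.2 | p <- l] ->
  peval f U * lv (filter (fun p => word_deg p.2 == g) l) = 0.
Proof.
move=> Hf Hg; set S := undup [seq word_deg p.2 | p <- l].
have uS : uniq S by exact: undup_uniq.
have Hall : all (fun p => word_deg p.2 \in S) l.
  by rewrite -(all_map (fun p => word_deg p.2) (fun g => g \in S)); apply/allP => h; rewrite mem_undup.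
set M := (\sum_(h <- S) absz h.1)%N.
have bound h : h \in S -> (absz h.1 <= M)%N.
  by move=> hS; rewrite /M (bigD1_seq h) //= leq_addr.
set N := (2 * M).+1.
have inj : {in S &, injective (eg N)}.
  move=> [x1 x2] [y1 y2] Hx Hy; have := bound _ Hx; have := bound _ Hy.
  rewrite /eg /N /= => By Bx E.
  have E2 : x2 = y2 by nia.
  by congr (_, _); rewrite E2 in E; lia.
apply: (vanish (s := S) (e := eg N) (c := fun g => peval f U * lv (filter (fun p => word_deg p.2 == g) l))) => //.
  by rewrite (map_inj_in_uniq inj).
move=> mu mu0; have [th Hth] := theta_ex N mu0.
have thU : th U = U by have := Hth GU; rewrite /= /eg /= mul0r addr0 expr0z scale1r.
have : th (peval f U * lv l) = 0 by rewrite Hf lr0.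
rewrite lrM lrmorph_peval thU (lv_part uS Hall) lr_sum mulr_sumr => E.
apply: (etrans _ E); apply: eq_bigr => h hS.
by rewrite (@theta_lv mu N th h) ?filter_all // scalerAr.
Qed.

Lemma tor_graded : graded_ideal U Y1p Y1m Y2p Y2m tor.
Proof.
split; first exact: tor_ideal.
move=> a [f [fn Hf]]; have [l El] := spanning a.
set S := undup [seq word_deg p.2 | p <- l].
exists S, (fun g => lv (filter (fun p => word_deg p.2 == g) l)); split; first exact: undup_uniq.
split.
  rewrite El; apply: lv_part; first exact: undup_uniq.
  by rewrite -(all_map (fun p => word_deg p.2) (fun g => g \in S)); apply/allP => h; rewrite mem_undup.
move=> g Hg; split; last by apply: homog_lv; exact: filter_all.
by exists f; split => //; apply: comp_tor => //; rewrite -El.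
Qed.

Hypothesis Uinj : forall f : {poly F}, f != 0 -> peval f U != 0.

Lemma tor_kernel b : tor b -> TGWA_kernel U Y1p Y1m Y2p Y2m b.
Proof.
move=> Hb; exists [:: b]; split; first by rewrite big_seq1.
move=> x; rewrite inE => /eqP ->; exists tor; split => //; first exact: tor_graded.
move=> r [f [fn Hf]]; apply/eqP; apply: contraT => rn.
have : peval (f * r) U != 0 by apply: Uinj; rewrite mulf_neq0 //; apply: contraNneq rn => ->; rewrite peval0.
by rewrite pevalM Hf eqxx.
Qed.

Lemma tor_iff b : tor b <-> TGWA_kernel U Y1p Y1m Y2p Y2m b.
Proof. by split; [exact: tor_kernel | exact: kernel_tor]. Qed.

End TGWA.

Section Lift.
Variable F : fieldType.
Variables (At A Tt T : algType F).
Variables (pi : {lrmorphism At -> A}) (phi : {lrmorphism At -> Tt}) (rho : {lrmorphism Tt -> T}).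
Hypothesis Hsur : forall y : A, exists x : At, pi x == y.
Hypothesis Hker : forall a : At, pi a = 0 <-> rho (phi a) = 0.

Definition sec (y : A) : At := xchoose (Hsur y).
Lemma sec_pi y : pi (sec y) = y.
Proof. exact/eqP/(xchooseP (Hsur y)). Qed.

Definition liftf (y : A) : T := rho (phi (sec y)).

Lemma liftf_pi x : liftf (pi x) = rho (phi x).
Proof.
have : pi (sec (pi x) - x) = 0 by rewrite lrB sec_pi subrr.
by move/Hker; rewrite lrB lrB => /eqP; rewrite subr_eq0 => /eqP.
Qed.

Lemma liftf_sub : zmod_morphism liftf.
Proof.
move=> y z; rewrite -{1}(sec_pi y) -{1}(sec_pi z) -lrB liftf_pi.
by rewrite !lrB.
Qed.

Lemma liftf_mon : monoid_morphism liftf.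
Proof.
split; first by rewrite -(lr1 pi) liftf_pi !lr1.
move=> y z; rewrite -{1}(sec_pi y) -{1}(sec_pi z) -lrM liftf_pi.
by rewrite !lrM.
Qed.

Lemma liftf_scale : scalable liftf.
Proof.
move=> c y; rewrite -{1}(sec_pi y) -lrZ liftf_pi.
by rewrite !lrZ.
Qed.

HB.instance Definition _ := GRing.isZmodMorphism.Build A T liftf liftf_sub.
HB.instance Definition _ := GRing.isMonoidMorphism.Build A T liftf liftf_mon.
HB.instance Definition _ := GRing.isScalable.Build F A T *:%R liftf liftf_scale.

Lemma liftf_lr : exists f : {lrmorphism A -> T}, f =1 liftf.
Proof. by exists liftf. Qed.

End Lift.

Section KT.
Variable F : fieldType.
Variables (a1 a2 : F) (p1 p2 : {poly F}).

Lemma comm_of_bracket (A : algType F) (h x : A) (c : F) :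
  h * x - x * h = c *: x -> x * h = (h - c%:A) * x.
Proof. by move=> E; rewrite mulrBl mulr_algl -E opprB addrC subrK. Qed.

Lemma comm_of_bracketN (A : algType F) (h x : A) (c : F) :
  h * x - x * h = - (c *: x) -> x * h = (h - (- c)%:A) * x.
Proof. by move=> E; rewrite mulrBl mulr_algl scaleNr opprK -[c *: x]opprK -E opprB addrC subrK. Qed.

Lemma addA_sub (A : algType F) (h : A) (c : F) : h + c%:A = h - (- c)%:A.
Proof. by rewrite scaleNr opprK. Qed.

Lemma KFP_to_TGWA (A : algType F) (H X1p X1m X2p X2m : A) :
  KFP_rel a1 a2 p1 p2 H X1p X1m X2p X2m -> TGWA_rel a1 a2 p1 p2 H X1p X1m X2p X2m.
Proof.
move=> [E1 [E2 [E3 [E4 [E5 [E6 [E7 [E8 [E9 E10]]]]]]]]].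
split; last split; last split; last split; last split; last split => //.
- move=> r; split.
  + exact: comm_peval (comm_of_bracket E1) r.
  + exact: comm_peval (comm_of_bracketN E2) r.
  + exact: comm_peval (comm_of_bracket E3) r.
  + exact: comm_peval (comm_of_bracketN E4) r.
- by rewrite peval_shift.
- by rewrite peval_shift -addA_sub.
- by rewrite peval_shift.
- by rewrite peval_shift -addA_sub.
Qed.

Lemma TGWA_to_KFP (A : algType F) (U X1p X1m X2p X2m : A) :
  TGWA_rel a1 a2 p1 p2 U X1p X1m X2p X2m -> KFP_rel a1 a2 p1 p2 U X1p X1m X2p X2m.
Proof.
move=> [Hr [E5 [E6 [E7 [E8 [E9 E10]]]]]].
have [G1 G2 G3 G4] := Hr 'X.
rewrite !peval_shift !pevalX in G1 G2 G3 G4.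
split; first by rewrite G1 mulrBl mulr_algl opprB addrC addrNK.
split; first by rewrite G2 mulrBl mulr_algl scaleNr opprK opprD addrA subrr add0r.
split; first by rewrite G3 mulrBl mulr_algl opprB addrC addrNK.
split; first by rewrite G4 mulrBl mulr_algl scaleNr opprK opprD addrA subrr add0r.
split; first by rewrite E5 peval_shift.
split; first by rewrite E6 peval_shift -addA_sub.
split; first by rewrite E7 peval_shift.
split; first by rewrite E8 peval_shift -addA_sub.
by split.
Qed.
End KT.

Unset Implicit Arguments.

Theorem mainTheorem7 (R : realType) (a1 a2 : R[i]) (p1 p2 : {poly R[i]}) :
  p1 != 0 -> p2 != 0 ->
  (p1 \Po ('X + (a2 / 2%:R)%:P)) * (p2 \Po ('X + (a1 / 2%:R)%:P)) =
  (p1 \Po ('X - (a2 / 2%:R)%:P)) * (p2 \Po ('X - (a1 / 2%:R)%:P)) ->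
  forall (At : algType R[i]) (H X1p X1m X2p X2m : At),
    KFP_presentation a1 a2 p1 p2 H X1p X1m X2p X2m ->
  forall (A : algType R[i]) (pi : {lrmorphism At -> A}),
    KFP_quotient H pi ->
  forall (Tt : algType R[i]) (U Y1p Y1m Y2p Y2m : Tt),
    TGWA_presentation a1 a2 p1 p2 U Y1p Y1m Y2p Y2m ->
  forall (T : algType R[i]) (rho : {lrmorphism Tt -> T}),
    TGWA_quotient U Y1p Y1m Y2p Y2m rho ->
  exists f : {lrmorphism A -> T}, bijective f.
Proof.
move=> p1nz p2nz _ At H X1p X1m X2p X2m HK A pi Hpi Tt U Y1p Y1m Y2p Y2m HT T rho Hrho.
have [[phi [phH ph1 ph2 ph3 ph4]] _] := HK.2 _ _ _ _ _ _ (TGWA_to_KFP HT.1).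
have [[psi [psU ps1 ps2 ps3 ps4]] _] := HT.2 _ _ _ _ _ _ (KFP_to_TGWA HK.1).
have psiphi : forall x, psi (phi x) = x.
  have [_ uniq] := HK.2 _ _ _ _ _ _ HK.1.
  have E : (psi \o phi) =1 idfun.
    by apply: uniq => /=; rewrite ?phH ?ph1 ?ph2 ?ph3 ?ph4 ?psU ?ps1 ?ps2 ?ps3 ?ps4.
  exact: E.
have phipsi : forall y, phi (psi y) = y.
  have [_ uniq] := HT.2 _ _ _ _ _ _ HT.1.
  have E : (phi \o psi) =1 idfun.
    by apply: uniq => /=; rewrite ?phH ?ph1 ?ph2 ?ph3 ?ph4 ?psU ?ps1 ?ps2 ?ps3 ?ps4.
  exact: E.
have Uinj : forall f : {poly R[i]}, f != 0 -> peval f U != 0.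
  move=> f fn; apply/negP => /eqP Hf.
  have : pi 1 = 0.
    apply/Hpi.2; exists f; split => //; rewrite mulr1.
    by rewrite -(psiphi (peval f H)) lrmorph_peval phH Hf lr0.
  by rewrite lr1 => /eqP; rewrite oner_eq0.
have Hker : forall a, pi a = 0 <-> rho (phi a) = 0.
  move=> a; rewrite Hpi.2 Hrho.2 -(tor_iff p1nz p2nz HT Uinj).
  split => -[f [fn Hf]]; exists f; split => //.
    by rewrite -phH -lrmorph_peval -lrM Hf lr0.
  by rewrite -(psiphi (peval f H * a)) lrM lrmorph_peval phH Hf lr0.
have Hsur : forall y, exists x, pi x == y by move=> y; have [x <-] := Hpi.1 y; exists x.
have Hsur' : forall z, exists x, rho x == z by move=> z; have [x <-] := Hrho.1 z; exists x.
have [f Ef] := liftf_lr Hsur Hker.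
exists f; exists (fun z => pi (psi (xchoose (Hsur' z)))) => [y|z].
  rewrite Ef; set v := xchoose _.
  have Hv : rho v = liftf phi rho Hsur y by apply/eqP; exact: (xchooseP (Hsur' _)).
  have : rho (phi (psi v - sec Hsur y)) = 0.
    by rewrite lrB phipsi lrB Hv subrr.
  by move/Hker; rewrite lrB sec_pi => /eqP; rewrite subr_eq0 => /eqP.
rewrite Ef liftf_pi // phipsi; apply/eqP; exact: (xchooseP (Hsur' _)).
Qed.
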